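(* In $G_3$, the subsemigroup generated by $A=\{a,b,c\}$ is free of rank $3$ (i.e., two words over $A$, without inverses, represent the same element of $G_3$ only if they are identical).
   Context: Let $X=\{1,2,3\}$ and $T$ the ternary rooted tree with vertex set $X^*$. $\mathrm{Aut}(T)$ is the group of root-preserving automorphisms with product left-to-right: $(gh)(u)=h(g(u))$. Sections $g|_u$ are defined by $g(uv)=g(u)\,g|_u(v)$; we write $g=(g|_1,g|_2,g|_3)\lambda_g$ with $\lambda_g\in S_3$ the action on the first level, so $g(xw)=\lambda_g(x)g|_x(w)$; $e$ is the identity. $G_3=\langle a,b,c\rangle\le\mathrm{Aut}(T)$ with $a=(a,b,e)(1\,2)$, $b=(e,b,c)(2\,3)$, $c=(a,e,c)(3\,1)$. *)

(* Defs.v *)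
From Stdlib Require Import List.
Import ListNotations.

(* Alphabet X = {1,2,3}; vertices of the ternary rooted tree are words X^*. *)
Inductive X : Type := x1 | x2 | x3.

Inductive gen : Type := ga | gb | gc.

(* Action of a generator on a vertex, following the wreath recursion
   a = (a,b,e)(1 2), b = (e,b,c)(2 3), c = (a,e,c)(3 1):
   g(x w) = lambda_g(x) g|_x(w). *)
Fixpoint act (g : gen) (u : list X) : list X :=
  match u with
  | [] => []
  | x :: w =>
    match g, x with
    | ga, x1 => x2 :: act ga w
    | ga, x2 => x1 :: act gb w
    | ga, x3 => x3 :: w
    | gb, x1 => x1 :: w
    | gb, x2 => x3 :: act gb w
    | gb, x3 => x2 :: act gc w
    | gc, x1 => x3 :: act ga w
    | gc, x2 => x2 :: w
    | gc, x3 => x1 :: act gc w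
    end
  end.

(* The element of G_3 represented by a positive word l1 l2 ... ln, with the
   left-to-right product (gh)(u) = h(g(u)): it maps u to ln(...(l1(u))). *)
Definition eval_word (s : list gen) (u : list X) : list X :=
  fold_left (fun v g => act g v) s u.

(* Main.v *)
Require Import Defs.
From Stdlib Require Import List Lia.
Import ListNotations.

Definition lam (g : gen) (x : X) : X :=
  match g, x with
  | ga, x1 => x2 | ga, x2 => x1 | ga, x3 => x3
  | gb, x1 => x1 | gb, x2 => x3 | gb, x3 => x2
  | gc, x1 => x3 | gc, x2 => x2 | gc, x3 => x1
  end.

Definition L (x : X) : gen := match x with x1 => ga | x2 => gb | x3 => gc end.
Definition Linv (g : gen) : X := match g with ga => x1 | gb => x2 | gc => x3 end.

Definition secw (g : gen) (x : X) : list gen :=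
  match g, x with
  | ga, x3 | gb, x1 | gc, x2 => []
  | _, _ => [L x]
  end.

Fixpoint sect (s : list gen) (x : X) : list gen :=
  match s with
  | [] => []
  | g :: s' => secw g x ++ sect s' (lam g x)
  end.

Fixpoint endp (s : list gen) (x : X) : X :=
  match s with
  | [] => x
  | g :: s' => endp s' (lam g x)
  end.

Definition eqel (s t : list gen) := forall u, eval_word s u = eval_word t u.

Lemma act_cons g x w : act g (x :: w) = lam g x :: eval_word (secw g x) w.
Proof. destruct g, x; reflexivity. Qed.

Lemma key s : forall x w, eval_word s (x :: w) = endp s x :: eval_word (sect s x) w.
Proof.
  induction s as [|g s IH]; intros x w; [reflexivity|].
  change (eval_word (g :: s) (x :: w)) with (eval_word s (act g (x :: w))).
  rewrite act_cons, IH. simpl. unfold eval_word. rewrite fold_left_app. reflexivity.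
Qed.

Lemma eqel_endp s t x : eqel s t -> endp s x = endp t x.
Proof. intros H. specialize (H [x]). rewrite !key in H. congruence. Qed.

Lemma eqel_sect s t x : eqel s t -> eqel (sect s x) (sect t x).
Proof. intros H w. specialize (H (x :: w)). rewrite !key in H. congruence. Qed.

Fixpoint actinv (g : gen) (u : list X) : list X :=
  match u with
  | [] => []
  | y :: w =>
    match g, y with
    | ga, x2 => x1 :: actinv ga w
    | ga, x1 => x2 :: actinv gb w
    | ga, x3 => x3 :: w
    | gb, x1 => x1 :: w
    | gb, x3 => x2 :: actinv gb w
    | gb, x2 => x3 :: actinv gc w
    | gc, x3 => x1 :: actinv ga w
    | gc, x2 => x2 :: w
    | gc, x1 => x3 :: actinv gc w
    end
  end.

Lemma act_actinv u : forall g, act g (actinv g u) = u.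
Proof. induction u as [|y w IH]; intros g; [reflexivity|]. destruct g, y; simpl; rewrite ?IH; reflexivity. Qed.

Lemma eqel_cancel g s t : eqel (g :: s) (g :: t) -> eqel s t.
Proof.
  intros H v. specialize (H (actinv g v)).
  change (eval_word s (act g (actinv g v)) = eval_word t (act g (actinv g v))) in H.
  rewrite act_actinv in H. exact H.
Qed.

Lemma sect_len s : forall x, length (sect s x) <= length s.
Proof.
  induction s as [|g s IH]; intros x; simpl; [lia|].
  rewrite length_app. specialize (IH (lam g x)). destruct g, x; simpl in *; lia.
Qed.

Lemma sect_sum s : length (sect s x1) + length (sect s x2) + length (sect s x3) = 2 * length s.
Proof.
  induction s as [|g s IH]; simpl; [reflexivity|].
  destruct g; simpl; rewrite ?length_app in *; simpl; lia.
Qed.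

Lemma sect_start s : forall x, sect s x = [] \/ exists r, sect s x = L x :: r.
Proof.
  induction s as [|g s IH]; intros x; simpl; [auto|].
  destruct g, x; simpl; eauto.
Qed.

Lemma sect_nil_endp s : forall z, sect s z = [] -> endp s z = z.
Proof.
  induction s as [|g s IH]; intros z H; simpl; [reflexivity|].
  destruct g, z; simpl in *; try discriminate; apply IH; assumption.
Qed.

Definition second (s : list gen) (x : X) : option X :=
  match sect s x with
  | _ :: v :: _ => Some (Linv v)
  | [_] => Some (endp s x)
  | [] => None
  end.

Lemma second_cons g s r : secw g r <> [] -> second (g :: s) r = Some (lam g r).
Proof.
  intros Hm. unfold second. simpl.
  destruct (sect_start s (lam g r)) as [A|[rr A]].
  - pose proof (sect_nil_endp _ _ A) as B.
    destruct g, r; simpl in *; try (exfalso; apply Hm; reflexivity); rewrite A, B; reflexivity.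
  - destruct g, r; simpl in *; try (exfalso; apply Hm; reflexivity); rewrite A; reflexivity.
Qed.

Lemma lam_inv g x : lam g (lam g x) = x.
Proof. destruct g, x; reflexivity. Qed.

Lemma recon s : forall t, (forall x, endp s x = endp t x) -> (forall x, sect s x = sect t x) -> s = t.
Proof.
  induction s as [|g s IH]; intros [|h t] He Hs.
  - reflexivity.
  - exfalso. destruct h; [specialize (Hs x1)|specialize (Hs x2)|specialize (Hs x1)]; simpl in Hs; discriminate.
  - exfalso. destruct g; [specialize (Hs x1)|specialize (Hs x2)|specialize (Hs x1)]; simpl in Hs; discriminate.
  - assert (Hsec : forall x, second (g :: s) x = second (h :: t) x).
    { intros x. unfold second. rewrite Hs, He. reflexivity. }
    assert (g = h).
    { destruct g, h; try reflexivity; exfalso;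
      [ specialize (Hsec x2) | specialize (Hsec x1) | specialize (Hsec x2)
      | specialize (Hsec x3) | specialize (Hsec x1) | specialize (Hsec x3) ];
      rewrite !second_cons in Hsec; simpl in *; discriminate. }
    subst h. f_equal. apply IH.
    + intros y. specialize (He (lam g y)). simpl in He. rewrite lam_inv in He. exact He.
    + intros y. specialize (Hs (lam g y)). simpl in Hs. rewrite lam_inv in Hs.
      eapply app_inv_head. exact Hs.
Qed.

Lemma shrink w : w <> [] -> (forall y, sect w y <> []) -> exists y, sect w y <> [] /\ length (sect w y) < length w.
Proof.
  intros Hw Hnz. pose proof (sect_sum w) as HS.
  destruct w as [|g w0]; [congruence|]. change (length (g :: w0)) with (S (length w0)) in *.
  destruct (Compare_dec.lt_dec (length (sect (g :: w0) x1)) (S (length w0))); [exists x1; auto|].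
  destruct (Compare_dec.lt_dec (length (sect (g :: w0) x2)) (S (length w0))); [exists x2; auto|].
  exists x3. split; [auto|lia].
Qed.

Lemma nz_two u v rest : u <> v -> forall y, sect (u :: v :: rest) y <> [].
Proof. intros Huv y. destruct u, v; try congruence; destruct y; simpl; discriminate. Qed.

Lemma pow2_sect g r : exists x u v rest, sect (g :: g :: r) x = u :: v :: rest /\ u <> v.
Proof.
  destruct g.
  - exists x1, ga, gb, (sect r x1). split; [reflexivity|discriminate].
  - exists x2, gb, gc, (sect r x2). split; [reflexivity|discriminate].
  - exists x1, ga, gc, (sect r x1). split; [reflexivity|discriminate].
Qed.

Lemma main n : forall s t, length s + length t <= n -> eqel s t -> s = t.
Proof.
  induction n as [|n IH]; intros s t Hl He.
  - destruct s, t; simpl in *; try lia; reflexivity.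
  - assert (E : forall w, length w <= S n -> eqel [] w -> w = []).
    { intros w Hw Hid. destruct w as [|g w0]; [reflexivity|]. exfalso.
      assert (Hc : (forall y, sect (g :: w0) y <> []) \/ exists z, sect (g :: w0) z = []).
      { destruct (sect (g :: w0) x1) eqn:E1; [right; eauto|].
        destruct (sect (g :: w0) x2) eqn:E2; [right; eauto|].
        destruct (sect (g :: w0) x3) eqn:E3; [right; eauto|].
        left; intros []; congruence. }
      destruct Hc as [Hnz | [z Hz]].
      - destruct (shrink (g :: w0)) as [y [Hy1 Hy2]]; [discriminate|assumption|].
        apply Hy1. symmetry. apply IH; [simpl in *; lia|].
        apply (eqel_sect [] (g :: w0) y). exact Hid.
      - destruct w0 as [|g2 r].
        + destruct g; [specialize (Hid [x1])|specialize (Hid [x2])|specialize (Hid [x1])];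
          simpl in Hid; discriminate.
        + assert (g2 = g).
          { simpl in Hz. destruct g, z; simpl in Hz; try discriminate;
            destruct g2; simpl in Hz; try discriminate; reflexivity. }
          subst g2.
          destruct (pow2_sect g r) as [x [u [v [rest [Hx Huv]]]]].
          pose proof (eqel_sect _ _ x Hid) as Hid'. simpl sect at 1 in Hid'.
          rewrite Hx in Hid'.
          pose proof (sect_len (g :: g :: r) x) as Hlx. rewrite Hx in Hlx.
          destruct (shrink (u :: v :: rest)) as [y [Hy1 Hy2]];
            [discriminate | apply nz_two; assumption |].
          apply Hy1. symmetry. apply IH; [simpl in *; lia|].
          apply (eqel_sect [] (u :: v :: rest) y). exact Hid'. }
    destruct s as [|g s], t as [|h t].
    + reflexivity.
    + symmetry. apply E; [simpl in *; lia | exact He].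
    + apply E; [simpl in *; lia | intros u; symmetry; apply He].
    + apply recon.
      * intros x. apply eqel_endp. exact He.
      * intros x. pose proof (eqel_sect _ _ x He) as Hx.
        pose proof (sect_len (g :: s) x) as L1. pose proof (sect_len (h :: t) x) as L2.
        destruct (sect_start (g :: s) x) as [A|[r A]], (sect_start (h :: t) x) as [B|[r' B]];
          rewrite ?A, ?B in *.
        -- reflexivity.
        -- apply IH; [simpl in *; lia | exact Hx].
        -- apply IH; [simpl in *; lia | exact Hx].
        -- f_equal. apply IH; [simpl in *; lia|]. eapply eqel_cancel. exact Hx.
Qed.

Theorem theorem5p2 :
  forall s t : list gen,
    (forall u : list X, eval_word s u = eval_word t u) -> s = t.
Proof.
  intros s t H. apply (main (length s + length t)); [lia | exact H].
Qed.
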